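(* Let $\lambda\ge0$, $d\ge0$ be constants and let $q$ be a probability measure on $(0,\infty)$ of the form $q=q_a+\sum_{r^j\in\mathcal D}p^j\delta_{r^j}$, with $q_a$ absolutely continuous w.r.t. Lebesgue measure, $\mathcal D\subset(0,\infty)$ finite, $p^j>0$, and $\int r\,q(dr)<\infty$. Let $r\mapsto\rho^r\ge0$ on $[0,\infty)$ have finite mass $N=\int_0^\infty\rho^r\,dr<\infty$ and satisfy the stationary equation $$\rho^r-\rho^s+\lambda q((s,r])=d\,N^{(s,r]}\quad\text{for all }0\le s<r,\qquad N^{(s,r]}:=\int_{(s,r]}\rho^\alpha\,d\alpha .$$ Then $\rho^r=\lambda\int_{(r,\infty)}e^{-d(\alpha-r)}q(d\alpha)$ for a.e. $r\ge0$.
   Context: $\delta_x$ denotes the Dirac measure at $x$. *)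

(* Defs.v *)
From HB Require Import structures.
From mathcomp Require Import all_boot all_order all_algebra.
From mathcomp Require Import all_classical all_reals all_analysis.

(* Main.v *)
Require Import Defs.
From HB Require Import structures.
From mathcomp Require Import all_boot all_order all_algebra.
From mathcomp Require Import all_classical all_reals all_analysis.
From mathcomp Require Import measurable_realfun.
From mathcomp Require Import ring lra.
Import Order.TTheory GRing.Theory Num.Theory.
Import numFieldTopology.Exports.
Local Open Scope classical_set_scope.
Local Open Scope ring_scope.
Section K.
Context {R : realType}.
Notation mu := (@lebesgue_measure R).
Variable r : R.
Definition S : set (R * R) := [set p | r < p.2 /\ p.2 <= p.1].
Lemma mS : measurable S.
Proof.
have -> : S = (snd @^-1` `]r, +oo[) `&` ((fun p : R * R => p.1 - p.2) @^-1` `[0, +oo[).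
  apply/seteqP; split => -[x y]; rewrite /S /preimage /setI /= !in_itv /= !andbT subr_ge0 //.
apply: measurableI.
  by rewrite -[X in measurable X]setTI; apply: measurable_snd.
rewrite -[X in measurable X]setTI; apply: measurable_realfun.measurable_funB => //.

Qed.
End K.
Section E.
Context {R : realType}.
Notation mu := (@lebesgue_measure R).

Lemma expint0 (c a : R) : 0 < c ->
  (\int[mu]_(x in `[a, +oo[) (c * expR (- c * x))%:E = (expR (- c * a))%:E)%E.
Proof.
move=> c0.
have cexpNM : continuous (fun z : R^o => expR (- c * z)).
  move=> z; apply: continuous_comp; last exact: continuous_expR.
  by apply: continuousM => //; apply: (@continuousN _ R^o); exact: cst_continuous.
rewrite (@ge0_continuous_FTC2y _ _ (fun x => - (expR (- c * x))) _ 0)//.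
- by rewrite EFinN oppeK add0e.
- by move=> x _; rewrite mulr_ge0 ?expR_ge0 ?ltW.
- apply: continuous_subspaceT => x.
  exact: (@continuousM R R (fun=> c) (fun z => expR (- c * z)) x (@cst_continuous _ _ _ x) (cexpNM x)).
- rewrite -oppr0; apply: cvgN.
  rewrite (_ : (fun x => expR (- c * x)) =
               (fun z => expR (- z)) \o (fun z => c * z)); last first.
    by apply: eq_fun => x; rewrite mulNr.
  apply: (@cvg_comp _ _ _ _ _ _ (pinfty_nbhs R)); last exact: cvgr_expR.
  exact: gt0_cvgMry.
- by apply: cvgN; apply/cvg_at_right_filter; exact: cexpNM.
- move=> z _.
  rewrite derive1_comp// derive1N// derive1_id mulN1r derive1_comp// derive1E.
  have /funeqP -> := @derive_expR R.
  by rewrite derive1Ml// derive1_id mulr1 mulrN opprK mulrC.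
Qed.
End E.

Section Key.
Context {R : realType}.
Notation leb := (@lebesgue_measure R).
Variable mu2 : {sigma_finite_measure set (measurableTypeR R) -> \bar R}.
Variables (phi : R -> R) (c r : R).
Hypothesis c0 : 0 < c.
Hypothesis mphi : measurable_fun setT phi.
Hypothesis phi0 : forall x, 0 <= phi x.

Lemma indic_ge0' (A : set (R * R)) p : 0 <= \1_A p :> R.
Proof. by rewrite indicE; case: (p \in A). Qed.

Definition kk (x : R) := c * expR (- (c * (x - r))).

Lemma kk_ge0 x : 0 <= kk x.
Proof. by rewrite /kk mulr_ge0 ?expR_ge0 ?ltW. Qed.

Lemma mkk : measurable_fun setT kk.
Proof.
apply: measurable_realfun.continuous_measurable_fun => x.
have cl : continuous (fun z : R^o => - (c * (z - r))).
  move=> z; apply: cvgN; apply: cvgM; first exact: cvg_cst.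
  by apply: cvgB; [exact: cvg_id | exact: cvg_cst].
have ce : continuous (fun z : R^o => expR (- (c * (z - r)))).
  by move=> z; apply: continuous_comp; [exact: cl | exact: continuous_expR].
exact: (@continuousM R R (fun=> c) (fun z => expR (- (c * (z - r)))) x (@cst_continuous _ _ _ x) (ce x)).
Qed.

Lemma in_set_itv (i : interval R) a : (a \in [set` i]) = (a \in i).
Proof. by apply/idP/idP => [/set_mem h|h]; [exact: h | exact/mem_set]. Qed.

Lemma mexpr : measurable_fun setT (fun x : R => expR (- (c * (x - r)))).
Proof.
apply: measurable_realfun.continuous_measurable_fun => x.
have cl : continuous (fun z : R^o => - (c * (z - r))).
  move=> z; apply: cvgN; apply: cvgM; first exact: cvg_cst.
  by apply: cvgB; [exact: cvg_id | exact: cvg_cst].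
by apply: continuous_comp; [exact: cl | exact: continuous_expR].
Qed.

Lemma Sin x a : ((x, a) \in S r) = (a \in `]r, x]).
Proof.
rewrite in_itv /=; apply/idP/idP => [/set_mem [] /= -> ->//|/andP[h1 h2]].
by apply/mem_set; split.
Qed.

Lemma kk_int a : (\int[leb]_(x in `[a, +oo[) (kk x)%:E = (expR (- (c * (a - r))))%:E)%E.
Proof.
transitivity (\int[leb]_(x in `[a, +oo[) ((c * expR (- c * x))%:E * (expR (c * r))%:E)%E)%E.
  apply: eq_integral => x _; rewrite -EFinM /kk; congr EFin.
  by rewrite -mulrA -expRD mulrBr opprB addrC mulNr.
have mfe : measurable_fun `[a, +oo[ (fun x => (c * expR (- c * x))%:E).
  apply/measurable_EFinP/measurable_funTS.
  apply: measurable_realfun.continuous_measurable_fun => x.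
  have ce : continuous (fun z : R^o => expR (- c * z)).
    move=> z; apply: continuous_comp; last exact: continuous_expR.
    by apply: cvgM; [exact: cvg_cst | exact: cvg_id].
  exact: (@continuousM R R (fun=> c) (fun z => expR (- c * z)) x (@cst_continuous _ _ _ x) (ce x)).
rewrite (ge0_integralZr leb (measurable_itv _) mfe); last 2 first.
- by move=> x _; rewrite lee_fin mulr_ge0 ?expR_ge0 ?ltW.
- by rewrite lee_fin expR_ge0.
rewrite expint0// -EFinM -expRD; congr (EFin (expR _)).
by rewrite mulrBr opprB addrC mulNr.
Qed.

Let f (p : R * R) : \bar R := (\1_(S r) p * kk p.1 * phi p.2)%:E.
Let f1 (p : R * R) : \bar R := (\1_(S r) p * phi p.2)%:E.

Let mf : measurable_fun setT f.
Proof.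
apply/measurable_EFinP; apply: measurable_realfun.measurable_funM.
  apply: measurable_realfun.measurable_funM.
    exact: measurable_realfun.measurable_indic (mS r).
  exact: measurableT_comp mkk measurable_fst.
exact: measurableT_comp mphi measurable_snd.
Qed.

Let mf1 : measurable_fun setT f1.
Proof.
apply/measurable_EFinP; apply: measurable_realfun.measurable_funM.
  exact: measurable_realfun.measurable_indic (mS r).
exact: measurableT_comp mphi measurable_snd.
Qed.

Let f_ge0 p : (0 <= f p)%E.
Proof. by rewrite /f lee_fin; apply: mulr_ge0; [apply: mulr_ge0; [exact: indic_ge0' | exact: kk_ge0] | exact: phi0]. Qed.

Let f1_ge0 p : (0 <= f1 p)%E.
Proof. by rewrite /f1 lee_fin; apply: mulr_ge0; [exact: indic_ge0' | exact: phi0]. Qed.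

Lemma inner_F x : (\int[mu2]_a f1 (x, a) = \int[mu2]_(a in `]r, x]) (phi a)%:E)%E.
Proof.
rewrite [RHS]integral_mkcond; apply: eq_integral => a _.
by rewrite /f1 patchE indicE Sin in_set_itv; case: ifP; rewrite ?mul1r ?mul0r.
Qed.

Lemma measurable_F : measurable_fun setT (fun x => \int[mu2]_(a in `]r, x]) (phi a)%:E)%E.
Proof.
apply: (eq_measurable_fun _ _ (@measurable_fun_fubini_tonelli_F _ _ _ _ _ mu2 f1 mf1 f1_ge0)).
by move=> x _; rewrite /fubini_F inner_F.
Qed.

Lemma key :
  (\int[leb]_(x in `]r, +oo[) ((kk x)%:E * \int[mu2]_(a in `]r, x]) (phi a)%:E)
  = \int[mu2]_(a in `]r, +oo[) (expR (- (c * (a - r))) * phi a)%:E)%E.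
Proof.
transitivity (\int[leb]_x \int[mu2]_a f (x, a))%E.
  rewrite integral_mkcond; apply: eq_integral => x _.
  rewrite patchE; case: ifP => xr.
    rewrite -ge0_integralZl_EFin//; last 3 first.
    - by move=> a _; rewrite lee_fin.
    - exact/measurable_EFinP/measurable_funTS.
    - exact: kk_ge0.
    rewrite integral_mkcond; apply: eq_integral => a _.
    rewrite /f patchE indicE Sin in_set_itv.
    by case: ifP; rewrite ?mul1r ?mul0r ?mulr0 ?mul0r// -EFinM mulrC.
  have xr' : ~~ (BRight r < BRight x)%O.
    by move: xr; rewrite in_set_itv in_itv /= andbT bnd_simp => /negbT.
  have xr2 : x <= r by move: xr'; rewrite bnd_simp -leNgt.
  rewrite integral0_eq// => a _.
  rewrite /f indicE Sin in_itv /=; case: (ltP r a) => ra /=; rewrite ?mul0r//.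
  by rewrite leNgt (le_lt_trans xr2 ra) /= !mul0r.
rewrite (@fubini_tonelli _ _ _ _ _ leb mu2 f mf f_ge0) [RHS]integral_mkcond.
apply: eq_integral => a _; rewrite patchE; case: ifP => ar.
  transitivity (\int[leb]_(x in `[a, +oo[) ((phi a)%:E * (kk x)%:E)%E)%E.
    rewrite [RHS]integral_mkcond; apply: eq_integral => x _.
    rewrite /f patchE indicE Sin !in_set_itv !in_itv /=.
    move: ar; rewrite in_set_itv in_itv /= andbT => -> /=; rewrite andbT.
    by case: ifP; rewrite ?mul1r ?mul0r// -EFinM mulrC.
  rewrite ge0_integralZl_EFin//; last 2 first.
  - by move=> x _; rewrite lee_fin kk_ge0.
  - by apply/measurable_EFinP; apply: measurable_funTS; exact: mkk.
  by rewrite kk_int -EFinM mulrC.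
rewrite integral0_eq// => x _.
rewrite /f indicE Sin in_itv /=.
by move: ar; rewrite in_set_itv in_itv /= andbT => ->; rewrite /= mul0r mul0r.
Qed.
End Key.

Section Main.
Context {R : realType}.
Notation leb := (@lebesgue_measure R).
Variables (lam dd : R) (q : probability (measurableTypeR R) R) (rho : R -> R).
Hypothesis lam0 : 0 <= lam.
Hypothesis rho0 : forall r, 0 <= r -> 0 <= rho r.
Hypothesis irho : leb.-integrable `[0, +oo[ (fun r => (rho r)%:E).
Hypothesis eqn : forall s r, 0 <= s -> s < r ->
     ((rho r - rho s)%:E + lam%:E * q [set` `]s, r]])%E =
     (dd%:E * \int[leb]_(a in `]s, r]) (rho a)%:E)%E.
Variable r : R.
Hypothesis r0 : 0 <= r.

Let phi : R -> R := rho \_ (`[0, +oo[ : set R).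

Let mrho : measurable_fun (`[0, +oo[ : set R) rho.
Proof. by apply/measurable_EFinP; exact: (measurable_int _ irho). Qed.

Let mphi : measurable_fun setT phi.
Proof. exact: (@measurable_restrictT _ _ _ _ (`[0, +oo[ : set R) rho (measurable_itv _)).1 mrho. Qed.

Let phiE x : 0 <= x -> phi x = rho x.
Proof. by move=> x0; rewrite /phi patchE ifT// in_set_itv in_itv /= andbT. Qed.

Let phi0 x : 0 <= phi x.
Proof.
rewrite /phi patchE; case: ifP => [|_]; last exact: lexx.
by rewrite in_set_itv in_itv /= andbT; exact: rho0.
Qed.

Let mphiE (D : set R) : measurable D -> measurable_fun D (fun x => (phi x)%:E).
Proof. by move=> mD; apply/measurable_EFinP; exact: measurable_funTS. Qed.

Let Itot : (\int[leb]_(x in `[0%R, +oo[) (phi x)%:E < +oo)%E.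
Proof.
move/integrableP : irho => [_]; apply: le_lt_trans; rewrite le_eqVlt; apply/orP; left; apply/eqP.
apply: eq_integral => x; rewrite in_set_itv in_itv /= andbT => x0.
by rewrite /= ger0_norm ?rho0// phiE.
Qed.

Let Isub (A : set R) : measurable A -> A `<=` `[0, +oo[ ->
  (\int[leb]_(x in A) (phi x)%:E < +oo)%E.
Proof.
move=> mA AS; apply: le_lt_trans Itot.
apply: ge0_subset_integral => //; first exact: mphiE.
by move=> x _; rewrite lee_fin.
Qed.

Let Nfin t : (\int[leb]_(a in `]r, t]) (phi a)%:E)%E \is a fin_num.
Proof.
rewrite ge0_fin_numE; last by apply: integral_ge0 => x _; rewrite lee_fin.
apply: Isub => // x /=; rewrite !in_itv /= andbT => /andP[rx _].
exact: le_trans r0 (ltW rx).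
Qed.

Let LN s t : 0 <= s -> (\int[leb]_(a in `]s, t]) (rho a)%:E = \int[leb]_(a in `]s, t]) (phi a)%:E)%E.
Proof.
move=> s0; apply: eq_integral => a; rewrite in_set_itv in_itv /= => /andP[sa _].
by rewrite phiE// (le_trans s0 (ltW sa)).
Qed.

Let qfin (A : set R) : measurable A -> q A \is a fin_num.
Proof.
move=> mA; rewrite ge0_fin_numE//.
exact: le_lt_trans (probability_le1 q mA) (ltey 1).
Qed.

Let Q t := fine (q [set` `]r, t]]).
Let QE t : q [set` `]r, t]] = (Q t)%:E.
Proof. by rewrite /Q fineK // qfin. Qed.
Let nn t := fine (\int[leb]_(a in `]r, t]) (phi a)%:E)%E.

Let Leq t : r < t -> rho t - rho r + lam * Q t = dd * nn t.
Proof.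
move=> rt; have := eqn r t r0 rt.
rewrite LN// QE -(fineK (Nfin t)).
by rewrite -EFinM -EFinD -EFinM => -[].
Qed.

Let NE t : (\int[leb]_(a in `]r, t]) (phi a)%:E)%E = (nn t)%:E.
Proof. by rewrite /nn fineK// Nfin. Qed.

Let q1 (D : set R) : measurable D -> (\int[q]_(a in D) 1%:E)%E = q D.
Proof. by move=> mD; have := integral_cst q mD 1; rewrite mul1e. Qed.

Lemma case_pos : 0 < dd ->
  (rho r)%:E = (lam%:E * \int[q]_(a in `]r, +oo[) (expR (- (dd * (a - r))))%:E)%E.
Proof.
move=> dd0.
set Iq := (\int[q]_(a in `]r, +oo[) _)%E.
pose J := (\int[leb]_(a in `]r, +oo[) (expR (- (dd * (a - r))) * phi a)%:E)%E.
have mkkD (D : set R) : measurable D -> measurable_fun D (fun x => (kk dd r x)%:E).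
  by move=> mD; apply/measurable_EFinP; apply: measurable_funTS; exact: mkk.
have kk0 x : (0 <= (kk dd r x)%:E)%E by rewrite lee_fin kk_ge0.
have Ik : (\int[leb]_(x in `]r, +oo[) (kk dd r x)%:E = 1)%E.
  rewrite integral_itv_obnd_cbnd; last exact: mkkD.
  by rewrite kk_int// subrr mulr0 oppr0 expR0.
have mexpphi : measurable_fun `]r, +oo[ (fun a => (expR (- (dd * (a - r))) * phi a)%:E).
  apply/measurable_EFinP; apply: measurable_funM; last exact: measurable_funTS.
  apply: measurable_funTS; exact: mexpr.
have Iphi : (\int[leb]_(x in `]r, +oo[) (kk dd r x * phi x)%:E = dd%:E * J)%E.
  rewrite /J -(ge0_integralZl_EFin leb (measurable_itv _) _ mexpphi); last exact: ltW.
    by apply: eq_integral => x _; rewrite /kk -mulrA EFinM.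
  by move=> x _; rewrite lee_fin mulr_ge0 ?expR_ge0.
have KQ : (\int[leb]_(x in `]r, +oo[) ((kk dd r x)%:E * \int[q]_(a in `]r, x]) 1%:E) = Iq)%E.
  rewrite (key q (fun=> 1) dd r dd0 (measurable_cst _) (fun=> ler01)).
  by apply: eq_integral => a _; rewrite mulr1.
have KL := key leb phi dd r dd0 mphi phi0.
have mFq : measurable_fun `]r, +oo[ (fun x => \int[q]_(a in `]r, x]) 1%:E)%E.
  exact: measurable_funTS (measurable_F q (fun=> 1) r (measurable_cst _) (fun=> ler01)).
have mFl : measurable_fun `]r, +oo[ (fun x => \int[leb]_(a in `]r, x]) (phi a)%:E)%E.
  exact: measurable_funTS (measurable_F leb phi r mphi phi0).
have H : (\int[leb]_(x in `]r, +oo[) ((kk dd r x)%:E * (lam * Q x + rho x)%:E) =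
          \int[leb]_(x in `]r, +oo[) ((kk dd r x)%:E * (rho r + dd * nn x)%:E))%E.
  apply: eq_integral => x; rewrite in_set_itv in_itv /= andbT => rx.
  by congr (_ * _)%E; congr EFin; rewrite -Leq//; ring.
have HL : (\int[leb]_(x in `]r, +oo[) ((kk dd r x)%:E * (lam * Q x + rho x)%:E) =
          lam%:E * Iq + dd%:E * J)%E.
  transitivity (\int[leb]_(x in `]r, +oo[) (lam%:E * ((kk dd r x)%:E * \int[q]_(a in `]r, x]) 1%:E) + (kk dd r x * phi x)%:E))%E.
    apply: eq_integral => x; rewrite in_set_itv in_itv /= andbT => rx.
    rewrite q1// QE phiE; last exact: le_trans r0 (ltW rx).
    by rewrite -!EFinM -EFinD; congr EFin; ring.
  have m1 : measurable_fun `]r, +oo[ (fun x => (kk dd r x)%:E * \int[q]_(a in `]r, x]) 1%:E)%E.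
    by apply: emeasurable_funM => //; exact: mkkD.
  have m1' : measurable_fun `]r, +oo[ (fun x => lam%:E * ((kk dd r x)%:E * \int[q]_(a in `]r, x]) 1%:E))%E.
    by apply: emeasurable_funM => //; exact: measurable_cst.
  have p1 x : (0 <= (kk dd r x)%:E * \int[q]_(a in `]r, x]) 1%:E)%E.
    by rewrite mule_ge0// integral_ge0.
  have m2 : measurable_fun `]r, +oo[ (fun x => (kk dd r x * phi x)%:E).
    apply/measurable_EFinP; apply: measurable_funM; last exact: measurable_funTS.
    apply: measurable_funTS; exact: mkk.
  rewrite (ge0_integralD leb (measurable_itv _) _ m1' _ m2); last 2 first.
  - by move=> x _; rewrite mule_ge0// lee_fin.
  - by move=> x _; rewrite lee_fin mulr_ge0// kk_ge0.
  rewrite (ge0_integralZl leb (measurable_itv _) m1); last 2 first.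
  - by move=> x _; exact: p1.
  - by rewrite lee_fin.
  by rewrite KQ Iphi.
have HR : (\int[leb]_(x in `]r, +oo[) ((kk dd r x)%:E * (rho r + dd * nn x)%:E) =
          (rho r)%:E + dd%:E * J)%E.
  transitivity (\int[leb]_(x in `]r, +oo[) ((rho r)%:E * (kk dd r x)%:E + dd%:E * ((kk dd r x)%:E * \int[leb]_(a in `]r, x]) (phi a)%:E)))%E.
    apply: eq_integral => x _.
    by rewrite NE -!EFinM -EFinD; congr EFin; ring.
  have m1 : measurable_fun `]r, +oo[ (fun x => (kk dd r x)%:E * \int[leb]_(a in `]r, x]) (phi a)%:E)%E.
    by apply: emeasurable_funM => //; exact: mkkD.
  have m1' : measurable_fun `]r, +oo[ (fun x => dd%:E * ((kk dd r x)%:E * \int[leb]_(a in `]r, x]) (phi a)%:E))%E.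
    by apply: emeasurable_funM => //; exact: measurable_cst.
  have m2 : measurable_fun `]r, +oo[ (fun x => (rho r)%:E * (kk dd r x)%:E)%E.
    by apply: emeasurable_funM => //; exact: mkkD.
  have p1 x : (0 <= (kk dd r x)%:E * \int[leb]_(a in `]r, x]) (phi a)%:E)%E.
    by rewrite mule_ge0// integral_ge0// => a _; rewrite lee_fin.
  rewrite (ge0_integralD leb (measurable_itv _) _ m2 _ m1'); last 2 first.
  - by move=> x _; rewrite mule_ge0// lee_fin rho0.
  - by move=> x _; rewrite mule_ge0// lee_fin ltW.
  rewrite (ge0_integralZl leb (measurable_itv _) (mkkD _ (measurable_itv _))); last 2 first.
  - by move=> x _; exact: kk0.
  - by rewrite lee_fin rho0.
  rewrite (ge0_integralZl leb (measurable_itv _) m1); last 2 first.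
  - by move=> x _; exact: p1.
  - by rewrite lee_fin ltW.
  by rewrite Ik KL mule1.
have Jfin : J \is a fin_num.
  rewrite ge0_fin_numE; last by apply: integral_ge0 => x _; rewrite lee_fin mulr_ge0 ?expR_ge0.
  apply: (le_lt_trans _ (Isub _ (measurable_itv `]r, +oo[) _)).
    apply: ge0_le_integral => //.
    - by move=> x _; rewrite lee_fin mulr_ge0 ?expR_ge0.
    - exact: mphiE.
    - move=> x; rewrite /= in_itv /= andbT => rx; rewrite lee_fin ler_piMl// expR_le1.
      by rewrite oppr_le0 mulr_ge0 ?(ltW dd0)// subr_ge0 ltW.
  move=> x /=; rewrite !in_itv /= !andbT => rx; exact: le_trans r0 (ltW rx).
have := HL; rewrite H HR => /(congr1 (fun z => z - dd%:E * J)%E).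
by rewrite !addeK ?fin_numM// => ->.
Qed.

Lemma case_zero : dd = 0 ->
  (rho r)%:E = (lam%:E * \int[q]_(a in `]r, +oo[) (expR (- (dd * (a - r))))%:E)%E.
Proof.
move=> dd0.
have -> : (\int[q]_(a in `]r, +oo[) (expR (- (dd * (a - r))))%:E = q [set` `]r, +oo[])%E.
  rewrite -q1//; apply: eq_integral => a _; by rewrite dd0 mul0r oppr0 expR0.
have Leq0 t : r < t -> rho t = rho r - lam * Q t.
  move=> rt; have := Leq t rt; rewrite dd0 mul0r => h.
  by rewrite -[LHS]subr0 -h; ring.
rewrite -(fineK (qfin _ (measurable_itv `]r, +oo[))); set Qi := fine _.
have Qle t : Q t <= Qi.
  rewrite -lee_fin -QE /Qi fineK; last exact: qfin.
  apply: le_measure; rewrite ?inE//; apply: subset_itvl => //.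
have Q0 t : 0 <= Q t by rewrite -lee_fin -QE.
rewrite -EFinM; congr EFin; apply/eqP; rewrite eq_le; apply/andP; split.
  rewrite leNgt; apply/negP => H.
  have c0 : 0 < rho r - lam * Qi by rewrite subr_gt0.
  have sub : `]r, +oo[ `<=` `[0, +oo[.
    by move=> x /=; rewrite !in_itv /= !andbT => rx; exact: le_trans r0 (ltW rx).
  have Icst : (\int[leb]_(x in `]r, +oo[) (cst (rho r - lam * Qi)%:E x) = +oo)%E.
    rewrite integral_cst; last exact: measurable_itv.
    rewrite [X in (_ * X)%E](_ : _ = +oo%E); last first.
      have := lebesgue_measure_itv `]r, +oo[.
      rewrite /= ltry addye// => h; exact: h.
    by rewrite muleC gt0_mulye// lte_fin.
  have := Isub _ (measurable_itv `]r, +oo[) sub.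
  suff -> : (\int[leb]_(x in `]r, +oo[) (phi x)%:E = +oo)%E by rewrite ltxx.
  apply/eqP; rewrite eq_le leey andTb -Icst.
  apply: ge0_le_integral => //.
  - by move=> x _; rewrite lee_fin ltW.
  - exact: mphiE.
  - move=> x; rewrite /= in_itv /= andbT => rx.
    rewrite lee_fin phiE; last exact: le_trans r0 (ltW rx).
    by rewrite (Leq0 x rx) lerD2l lerN2 ler_wpM2l.
have [->|lamn0] := eqVneq lam 0; first by rewrite mul0r rho0.
have lamp : 0 < lam by rewrite lt_neqAle eq_sym lamn0.
rewrite mulrC -ler_pdivlMr// -lee_fin /Qi fineK; last exact: qfin.
pose F := fun n : nat => [set` `]r, n%:R]].
have hU : \bigcup_n F n = `]r, +oo[%classic.
  apply/seteqP; split => x /=.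
    by move=> [n _]; rewrite /F /= !in_itv /= andbT => /andP[].
  rewrite in_itv /= andbT => rx.
  exists (Num.Def.trunc x).+1 => //.
  by rewrite /F /= in_itv /= rx /= ltW// truncnS_gt.
have mU : measurable (\bigcup_n F n).
  by apply: bigcup_measurable => k _; exact: measurable_itv.
have homo : {homo F : n m / (n <= m)%N >-> (n <= m)%O}.
  move=> m n mn; apply/subsetPset => x; rewrite /F /= !in_itv /= => /andP[-> /=].
  by move=> /le_trans; apply; rewrite ler_nat.
have hF := @nondecreasing_cvg_mu _ _ _ q F (fun n => measurable_itv _) mU homo.
rewrite -hU -(cvg_lim (@ereal_hausdorff R) hF).
apply: lime_le; first by apply/cvg_ex; exists (q (\bigcup_n F n)).
apply: nearW => n /=.
rewrite /F QE lee_fin.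
case: (ltP r n%:R) => rn.
  have := rho0 n%:R (ler0n _ n); rewrite Leq0// subr_ge0 => h.
  by rewrite ler_pdivlMr// mulrC.
rewrite /Q set_itv_ge ?measure0 /=; last by rewrite bnd_simp -leNgt.
by rewrite divr_ge0// rho0.
Qed.

End Main.
Theorem proposition2p3 (R : realType) (lam dd : R)
  (q : probability (measurableTypeR R) R)
  (qa : {measure set (measurableTypeR R) -> \bar R})
  (n : nat) (rj pj : 'I_n -> R)
  (rho : R -> R) :
  0 <= lam -> 0 <= dd ->
  (* q is a probability measure on (0, +oo) *)
  q [set` `]-oo, 0]] = 0%E ->
  (* decomposition q = q_a + sum_j p^j delta_{r^j} *)
  qa `<< (@lebesgue_measure R) ->
  injective rj ->
  (forall j, 0 < rj j) ->
  (forall j, 0 < pj j) ->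
  (forall A, measurable A ->
     q A = (qa A + \sum_(j < n) (pj j)%:E * \d_(rj j) A)%E) ->
  (* finite first moment *)
  (\int[q]_x (`|x|)%:E < +oo)%E ->
  (* rho >= 0 on [0, oo) with finite mass *)
  (forall r, 0 <= r -> 0 <= rho r) ->
  (@lebesgue_measure R).-integrable `[0, +oo[ (fun r => (rho r)%:E) ->
  (* stationary equation *)
  (forall s r, 0 <= s -> s < r ->
     ((rho r - rho s)%:E + lam%:E * q [set` `]s, r]])%E =
     (dd%:E * \int[@lebesgue_measure R]_(a in `]s, r]) (rho a)%:E)%E) ->
  {ae @lebesgue_measure R, forall r, 0 <= r ->
     (rho r)%:E =
     (lam%:E * \int[q]_(a in `]r, +oo[) (expR (- (dd * (a - r))))%:E)%E}.
Proof.
move=> lam0 dd0 _ _ _ _ _ _ _ rho0 irho eqn.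
apply: aeW => r r0.
have [ddp|dde] : 0 < dd \/ dd = 0.
  by move: dd0; rewrite le_eqVlt => /orP[/eqP <-|->]; [right|left].
- by apply: case_pos.
- by apply: case_zero.
Qed.
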